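(* Let $\mathbf{C}$ be a covering of a finite nonempty set $U$. Then $Cov(\mathbf{C})=\mathbf{C}$ if and only if $\mathbf{C}$ is an invariable covering.
   Context: A covering of $U$ is a family (set) $\mathbf{C}$ of subsets of $U$ with $\emptyset\notin\mathbf{C}$ and $\bigcup\mathbf{C}=U$; its elements are called blocks. For $x\in U$, the neighborhood of $x$ is $N(x)=\bigcap\{K\in\mathbf{C}: x\in K\}$, and $Cov(\mathbf{C})=\{N(x): x\in U\}$. The membership repeat degree of $x\in U$ is $\partial(x)=|\{K\in\mathbf{C}: x\in K\}|$. The common block repeat degree of $(x,y)\in U\times U$ is $\lambda(x,y)=|\{K\in\mathbf{C}: \{x,y\}\subseteq K\}|$. A block $K\in\mathbf{C}$ is a core block of $x\in U$ if $x\in K$ and $\lambda(x,y)=\partial(x)$ for every $y\in K$. A block $K\in\mathbf{C}$ is a reducible element of $\mathbf{C}$ if $K$ is the union of some subfamily of $\mathbf{C}\setminus\{K\}$; otherwise it is irreducible. $\mathbf{C}$ is irreducible if all its blocks are irreducible elements. $\mathbf{C}$ is an invariable covering if $\mathbf{C}$ is irreducible and every $x\in U$ has a core block in $\mathbf{C}$. *)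

(* Defs.v *)
From mathcomp Require Import all_boot.
Set Implicit Arguments. Unset Strict Implicit. Unset Printing Implicit Defensive.

Section Cov.
Variable T : finType.

Definition is_covering (U : {set T}) (C : {set {set T}}) : Prop :=
  set0 \notin C /\ (forall K, K \in C -> K \subset U) /\ cover C = U.

Definition nbhd (C : {set {set T}}) (x : T) : {set T} :=
  \bigcap_(K in C | x \in K) K.

Definition Cov (U : {set T}) (C : {set {set T}}) : {set {set T}} :=
  [set nbhd C x | x in U].

Definition mrd (C : {set {set T}}) (x : T) : nat := #|[set K in C | x \in K]|.

Definition cbrd (C : {set {set T}}) (x y : T) : nat :=
  #|[set K in C | (x \in K) && (y \in K)]|.

Definition core_block (C : {set {set T}}) (x : T) (K : {set T}) : Prop :=
  K \in C /\ x \in K /\ (forall y, y \in K -> cbrd C x y = mrd C x).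

Definition reducible (C : {set {set T}}) (K : {set T}) : Prop :=
  exists F : {set {set T}}, F \subset C :\ K /\ cover F = K.

Definition irreducible_cov (C : {set {set T}}) : Prop :=
  forall K, K \in C -> ~ reducible C K.

Definition invariable (U : {set T}) (C : {set {set T}}) : Prop :=
  irreducible_cov C /\ (forall x, x \in U -> exists K, core_block C x K).

End Cov.

(* Main.v *)
Require Import Defs.
From mathcomp Require Import all_boot.

Section S.
Variable T : finType.
Implicit Types (C : {set {set T}}) (K : {set T}) (x y : T).

Lemma in_nbhd C x y : (y \in nbhd C x) = [forall K in C, (x \in K) ==> (y \in K)].
Proof.
apply/bigcapP/forall_inP.
  by move=> H K KC; apply/implyP => xK; apply: H; rewrite KC xK.
by move=> H K /andP[KC xK]; exact: (implyP (H K KC)).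
Qed.

Lemma nbhd_self C x : x \in nbhd C x.
Proof. by rewrite in_nbhd; apply/forall_inP => K _; apply/implyP. Qed.

Lemma nbhd_sub C x K : K \in C -> x \in K -> nbhd C x \subset K.
Proof. by move=> KC xK; apply/subsetP => y; rewrite in_nbhd => /forall_inP/(_ K KC)/implyP; apply. Qed.

Lemma cbrd_mrd C x y : (cbrd C x y == mrd C x) = (y \in nbhd C x).
Proof.
rewrite /cbrd /mrd.
have sub : [set K in C | (x \in K) && (y \in K)] \subset [set K in C | x \in K].
  by apply/subsetP => K; rewrite !inE => /and3P[-> -> _].
apply/idP/idP.
- move=> /eqP E.
  have /eqP EE : [set K in C | (x \in K) && (y \in K)] == [set K in C | x \in K].
    by rewrite eqEcard sub E leqnn.
  rewrite in_nbhd; apply/forall_inP => K KC; apply/implyP => xK.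
  have : K \in [set K in C | x \in K] by rewrite inE KC.
  by rewrite -EE !inE => /and3P[].
- move=> yN; apply/eqP.
  suff -> : [set K in C | (x \in K) && (y \in K)] = [set K in C | x \in K] by [].
  apply/setP => K; rewrite !inE.
  case KC: (K \in C) => //=; case xK: (x \in K) => //=.
  by move: yN; rewrite in_nbhd => /forall_inP/(_ K KC)/implyP; apply.
Qed.

Lemma core_nbhd C x K : core_block C x K -> K = nbhd C x.
Proof.
move=> [KC [xK H]]; apply/eqP; rewrite eqEsubset nbhd_sub // andbT.
by apply/subsetP => y yK; rewrite -cbrd_mrd H.
Qed.

Lemma nbhd_core C x : nbhd C x \in C -> core_block C x (nbhd C x).
Proof.
move=> NC; split=> //; split; first exact: nbhd_self.
by move=> y yN; apply/eqP; rewrite cbrd_mrd.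
Qed.
End S.

Theorem theorem23 (T : finType) (U : {set T}) (C : {set {set T}}) :
  U != set0 -> is_covering U C ->
  (Cov U C = C <-> invariable U C).
Proof.
move=> _ [C0 [CU covU]]; split.
- move=> E; split.
  + move=> K KC [F [FS covF]].
    move: KC FS covF; rewrite -{1}E => /imsetP[x xU ->] FS covF.
    have : x \in cover F by rewrite covF nbhd_self.
    case/bigcupP => K' K'F xK'.
    have := subsetP FS _ K'F; rewrite !inE => /andP[ne K'C].
    have s1 : nbhd C x \subset K' by exact: nbhd_sub.
    have s2 : K' \subset nbhd C x by rewrite -covF; exact: bigcup_sup.
    by move: ne; rewrite eq_sym eqEsubset s1 s2.
  + move=> x xU; exists (nbhd C x); apply: nbhd_core.
    have : nbhd C x \in Cov U C by apply/imsetP; exists x.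
    by rewrite E.
- move=> [irr core].
  have NC : forall x, x \in U -> nbhd C x \in C.
    by move=> x xU; have [K cK] := core x xU; rewrite -(@core_nbhd _ _ _ _ cK); case: cK.
  apply/eqP; rewrite eqEsubset; apply/andP; split.
    by apply/subsetP => K /imsetP[x xU ->]; exact: NC.
  apply/subsetP => K KC.
  have KU := CU K KC.
  case: (boolP [exists x in K, nbhd C x == K]).
    case/exists_inP => x xK /eqP <-; apply/imsetP; exists x => //.
    exact: (subsetP KU).
  move=> /exists_inPn H; exfalso; apply: (irr K KC).
  exists [set nbhd C x | x in K]; split.
    apply/subsetP => N /imsetP[x xK ->]; rewrite !inE H //=.
    exact: NC (subsetP KU x xK).
  apply/eqP; rewrite eqEsubset; apply/andP; split.
    apply/bigcupsP => N /imsetP[x xK ->]; apply: nbhd_sub => //.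
  apply/subsetP => x xK; apply/bigcupP; exists (nbhd C x).
    by apply/imsetP; exists x.
  exact: nbhd_self.
Qed.
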